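(* Let $G$ be a finite abelian group of order $n$, let $S\subset G^n$ be the set of bijections $\{1,\dots,n\}\to G$, and let $m\ge0$ be an integer. Let $\mathfrak{M}_m\subset\hat G^n$ be the set of all $m$-sparse $\chi$ whose nontrivial coordinates are killed by a unique partition with $m/2$ parts (so $\mathfrak M_m=\emptyset$ if $m$ is odd). Then \[ \sum_{m\text{-sparse}~\chi\notin\mathfrak{M}_m}|\widehat{1_S}(\chi)|^3 = O_m\Big(\frac1n\Big(\frac{n!}{n^n}\Big)^3\Big), \] with the implied constant depending only on $m$.
   Context: $\hat G$ is the dual group of $G$, written additively, with $0$ the trivial character. For $\chi=(\chi_1,\dots,\chi_n)\in\hat G^n$, $\widehat{1_S}(\chi)=\frac{1}{n^n}\sum_{\pi\in S}\prod_{i=1}^n\chi_i(\pi(i))$. $\chi$ is $m$-sparse if exactly $m$ of its coordinates are nontrivial. If the nontrivial coordinates of $\chi$ are $\chi_{j_1},\dots,\chi_{j_m}$ (indexed by a set $N=\{j_1,\dots,j_m\}$), a partition $\mathcal P$ of $N$ kills them if $\sum_{i\in P}\chi_i=0$ for every part $P\in\mathcal P$. *)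

(* Defs.v *)
(* G is a finite abelian group (written multiplicatively as a
   finGroupType with abelian [set: gT]); its dual group is irr [set: gT],
   indexed by Iirr [set: gT], with 0 the trivial character. *)
From HB Require Import structures.
From mathcomp Require Import all_boot all_order all_algebra all_fingroup all_solvable all_field all_character.
Set Implicit Arguments. Unset Strict Implicit. Unset Printing Implicit Defensive.
Import Order.TTheory GRing.Theory Num.Theory.
Local Open Scope ring_scope.

Section Defs.
Variable gT : finGroupType.

Definition dualvec := {ffun 'I_#|gT| -> Iirr [set: gT]}.

(* S = bijections {1..n} -> G (injective maps between sets of equal size) *)
Definition bijS : {set {ffun 'I_#|gT| -> gT}} := [set pi : {ffun 'I_#|gT| -> gT} | injectiveb pi].

Definition hat1S (chi : dualvec) : algC :=
  ((#|gT| ^ #|gT|)%N%:R)^-1 *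
    \sum_(pi in bijS) \prod_(i < #|gT|) 'chi[[set: gT]]_(chi i) (pi i).

Definition nontriv (chi : dualvec) : {set 'I_#|gT|} := [set i | chi i != 0].

Definition sparse (m : nat) (chi : dualvec) : bool := #|nontriv chi| == m.

(* P kills chi: in every part, the (additively written) sum of the characters
   is trivial, i.e. their product as class functions is the trivial character *)
Definition kills (chi : dualvec) (P : {set {set 'I_#|gT|}}) : bool :=
  [forall B in P, \prod_(i in B) 'chi[[set: gT]]_(chi i) == 1].

Definition half_partitions (m : nat) (chi : dualvec) : {set {set {set 'I_#|gT|}}} :=
  [set P | [&& partition P (nontriv chi), (#|P| * 2 == m)%N & kills chi P]].

Definition inM (m : nat) (chi : dualvec) : bool :=
  sparse m chi && (#|half_partitions m chi| == 1)%N.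

End Defs.

(* Main.v *)
Require Import Defs.
From HB Require Import structures.
From mathcomp Require Import all_boot all_order all_algebra all_fingroup all_solvable all_field all_character.
From mathcomp Require Import ring lra zify.
Set Implicit Arguments. Unset Strict Implicit. Unset Printing Implicit Defensive.
Import Order.TTheory GRing.Theory Num.Theory.
Local Open Scope ring_scope.

Section Main.
Variable gT : finGroupType.
Local Notation n := #|gT|.
Local Notation G := [set: gT].
Local Notation CF := 'CF([set: gT]).

Definition Asum (D : {set 'I_n}) (psi : 'I_n -> CF) : algC :=
  \sum_(pi in bijS gT) \prod_(i in D) psi i (pi i).

Definition upd (psi : 'I_n -> CF) (j a : 'I_n) : 'I_n -> CF :=
  fun i => if i == j then psi j * psi a else psi i.

Definition sw (a j : 'I_n) (pi : {ffun 'I_n -> gT}) : {ffun 'I_n -> gT} :=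
  [ffun i => pi (tperm a j i)].

Lemma swK a j : involutive (sw a j).
Proof. by move=> pi; apply/ffunP=> i; rewrite !ffunE tpermK. Qed.

Lemma sw_bij a j pi : (sw a j pi \in bijS gT) = (pi \in bijS gT).
Proof.
rewrite !inE; apply/injectiveP/injectiveP => H x y.
  move=> e; apply: (@perm_inj _ (tperm a j)); apply: H; rewrite !ffunE.
  by rewrite !tpermK.
by rewrite !ffunE => /H /perm_inj.
Qed.

Lemma sum_bij_char (pi : {ffun 'I_n -> gT}) (f : gT -> algC) :
  pi \in bijS gT -> \sum_(j < n) f (pi j) = \sum_x f x.
Proof.
rewrite inE => /injectiveP inj.
have bij : bijective pi by apply: inj_card_bij; rewrite // card_ord.
by rewrite (reindex pi) //; exact: onW_bij.
Qed.

Lemma Arec (D : {set 'I_n}) (psi : 'I_n -> CF) (a : 'I_n) : a \in D ->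
  (#|~: (D :\ a)|)%:R * Asum D psi =
  (\sum_x psi a x) * Asum (D :\ a) psi
   - \sum_(j in D :\ a) Asum (D :\ a) (upd psi j a).
Proof.
move=> aD; set D' := D :\ a.
pose Phi pi := \prod_(i in D') psi i (pi i).
have E1 : Asum D psi = \sum_(pi in bijS gT) Phi pi * psi a (pi a).
  apply: eq_bigr => pi _; rewrite (bigD1 a) //= mulrC; congr (_ * _).
  by apply: eq_bigl => i; rewrite /D' !inE andbC.
have E2 j : j \in ~: D' ->
   Asum D psi = \sum_(pi in bijS gT) Phi pi * psi a (pi j).
  move=> jD; rewrite E1 (reindex_inj (inv_inj (swK a j))) /=.
  apply: eq_big => [pi|pi _]; first by rewrite sw_bij.
  rewrite /Phi; congr (_ * _); last by rewrite /sw ffunE tpermL.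
  apply: eq_bigr => i iD; rewrite /sw ffunE tpermD //.
    by apply: contraTneq iD => <-; rewrite /D' !inE eqxx.
  by apply: contraTneq iD => <-; rewrite inE in jD.
have E3 j : j \in D' ->
   Asum D' (upd psi j a) = \sum_(pi in bijS gT) Phi pi * psi a (pi j).
  move=> jD; apply: eq_bigr => pi _; rewrite /Phi (bigD1 j) //= [in RHS](bigD1 j) //=.
  rewrite /upd eqxx cfunE -!mulrA; congr (_ * _); rewrite mulrC; congr (_ * _).
  by apply: eq_bigr => i /andP[_ /negbTE ->].
have -> : (#|~: D'|)%:R * Asum D psi =
   \sum_(j in ~: D') \sum_(pi in bijS gT) Phi pi * psi a (pi j).
  by rewrite mulr_natl -sumr_const; apply: eq_bigr => j /E2.
rewrite exchange_big /= [X in X - _](_ : _ =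
   \sum_(pi in bijS gT) Phi pi * \sum_(j < n) psi a (pi j)); last first.
  rewrite /Asum mulr_sumr; apply: eq_bigr => pi /sum_bij_char ->.
  by rewrite mulrC.
rewrite (eq_bigr (fun j => \sum_(pi in bijS gT) Phi pi * psi a (pi j))); last first.
  by move=> j /E3.
rewrite [X in _ - X]exchange_big /= -sumrB; apply: eq_bigr => pi _.
rewrite -mulr_sumr -mulr_sumr -mulrBr; congr (_ * _).
rewrite [in RHS](bigID (mem D')) /= addrC addrK; apply: eq_bigl => j; by rewrite inE.
Qed.

Lemma lin_sum (phi : CF) : phi \is a linear_char ->
  \sum_x phi x = if phi == 1 then n%:R else 0.
Proof.
move=> Lphi; have /irrP[i ->] := lin_char_irr Lphi.
have := cfdot_irr i 0; rewrite cfdotE irr0 cardsT.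
have -> : \sum_(x in G) 'chi_i x * ((1 : CF) x)^* = \sum_x 'chi_i x.
  by apply: eq_big => [x|x _]; rewrite ?inE // cfun1E inE conjC1 mulr1.
have -> : ('chi_i == 1) = (i == 0) by rewrite -irr0 (inj_eq irr_inj).
move=> E; have n0 : (n%:R : algC) != 0 by rewrite pnatr_eq0 -lt0n; apply/card_gt0P; exists 1%g.
by rewrite -[LHS](mulVKf n0) E; case: (i == 0); rewrite ?mulr1 ?mulr0.
Qed.

Definition kl (psi : 'I_n -> CF) (P : {set {set 'I_n}}) :=
  [forall B in P, \prod_(i in B) psi i == 1].

Definition W (D : {set 'I_n}) (psi : 'I_n -> CF) :=
  \max_(P : {set {set 'I_n}} | partition P D && kl psi P) (n ^ #|P|)%N.

Lemma bigmax_mulle (I : finType) (C : pred I) (F : I -> nat) k X :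
  (forall i, C i -> k * F i <= X)%N -> (k * \max_(i | C i) F i <= X)%N.
Proof.
move=> H; elim/big_ind: _ => //; first by rewrite muln0.
by move=> x y Hx Hy; case: (leqP x y).
Qed.

Lemma W1 (D : {set 'I_n}) psi a : a \in D -> psi a = 1 ->
  (n * W (D :\ a) psi <= W D psi)%N.
Proof.
move=> aD pa; apply: bigmax_mulle => P' /andP[pP' kP'].
have aP' : [set a] \notin P'.
  apply/negP => H; have : a \in cover P' by apply/bigcupP; exists [set a]; rewrite ?inE.
  by rewrite (cover_partition pP') !inE eqxx.
have pP : partition ([set a] |: P') D.
  rewrite -{1}(setD1K aD); apply: partitionU1 => //.
    by apply/set0Pn; exists a; rewrite inE.
  by rewrite disjoints1 !inE eqxx.
have kP : kl psi ([set a] |: P').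
  apply/forall_inP => B; rewrite !inE => /orP[/eqP -> | BP].
    by rewrite big_set1 pa.
  by move/forall_inP: kP' => /(_ B BP).
have := @leq_bigmax_cond _ (fun P => partition P D && kl psi P) (fun P => n ^ #|P|)%N _ (introT andP (conj pP kP)).
by rewrite cardsU1 aP' -expnS.
Qed.

Lemma W2 (D : {set 'I_n}) psi a j : a \in D -> j \in D :\ a ->
  (W (D :\ a) (upd psi j a) <= W D psi)%N.
Proof.
move=> aD jD; rewrite -[X in (X <= _)%N]mul1n; apply: bigmax_mulle => P /andP[pP kP].
rewrite mul1n; set D' := D :\ a in pP kP jD.
have cP : cover P = D' by apply: cover_partition.
have tP := partition_trivIset pP.
set B0 := pblock P j.
have B0P : B0 \in P by rewrite pblock_mem // cP.
have jB0 : j \in B0 by rewrite mem_pblock cP.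
have B0D : B0 \subset D' by apply: partitionS pP B0P.
have aD' : a \notin D' by rewrite !inE eqxx.
have aB0 : a \notin B0 by apply: contra aD'; apply: (subsetP B0D).
set P2 := (a |: B0) |: (P :\ B0).
have nP : (a |: B0) \notin P :\ B0.
  apply/negP => /setD1P[_ H]; have : a \in cover P.
    by apply/bigcupP; exists (a |: B0); rewrite ?setU11.
  by rewrite cP (negbTE aD').
have pP2 : partition P2 D.
  have -> : D = (a |: B0) :|: (D' :\: B0).
    apply/setP => x; rewrite !inE; case: (x =P a) => [->|xa] //=.
    case xB: (x \in B0) => //=.
    by have := subsetP B0D x xB; rewrite !inE => /andP[].
  apply: partitionU1; first exact: partitionD1.
    by apply/set0Pn; exists a; rewrite setU11.
  rewrite -setI_eq0; apply/eqP/setP => x; rewrite !inE.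
  case: (x =P a) => [->|] /=; first by rewrite andbF.
  by case: (x \in B0); rewrite ?andbF.
have kP2 : kl psi P2.
  apply/forall_inP => B; rewrite !inE => /orP[/eqP -> | /andP[BB0 BP]].
    rewrite big_setU1 //= (bigD1 j) //=.
    move/forall_inP: kP => /(_ _ B0P); rewrite (bigD1 j) //= {1}/upd eqxx.
    rewrite (eq_bigr (fun i => psi i)); last by move=> i /andP[_ /negbTE]; rewrite /upd => ->.
    by rewrite mulrCA mulrA.
  move/forall_inP: kP => /(_ _ BP); rewrite (eq_bigr (fun i => psi i)) //.
  move=> i iB; rewrite /upd; case: (i =P j) => // ij.
  by case/negP: BB0; rewrite -ij in jB0; rewrite /B0 -ij (def_pblock tP BP iB).
have := @leq_bigmax_cond _ (fun P => partition P D && kl psi P) (fun P => n ^ #|P|)%N _ (introT andP (conj pP2 kP2)).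
by rewrite cardsU1 nP (cardsD1 B0 P) B0P.
Qed.


Lemma card_bijS : #|bijS gT| = n`!.
Proof. by rewrite /bijS card_inj_ffuns card_ord ffactnn. Qed.

Lemma W0 psi : (1 <= W set0 psi)%N.
Proof.
have pP : partition (set0 : {set {set 'I_n}}) set0 by rewrite partition_set0.
have kP : kl psi set0 by apply/forall_inP => B; rewrite inE.
have := @leq_bigmax_cond _ (fun P => partition P set0 && kl psi P) (fun P => n ^ #|P|)%N _ (introT andP (conj pP kP)).
by rewrite cards0 expn0.
Qed.

Lemma Abound d : forall (D : {set 'I_n}) psi, #|D| = d ->
  (forall i, psi i \is a linear_char) ->
  `|Asum D psi| <= (d`! * (n - d)`! * W D psi)%:R.
Proof.
elim: d => [|d IH] D psi cD Lpsi.
  have -> : D = set0 by apply/eqP; rewrite -cards_eq0 cD.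
  rewrite /Asum (eq_bigr (fun _ => 1)); last by move=> pi _; rewrite big_set0.
  rewrite sumr_const card_bijS normr_nat ler_nat subn0 mul1n.
  by rewrite -{1}[n`!]muln1 leq_mul2l W0 orbT.
have /set0Pn[a aD] : D != set0 by rewrite -card_gt0 cD.
set D' := D :\ a.
have cD' : #|D'| = d by move: cD; rewrite (cardsD1 a D) aD add1n => [[]].
have dn : (d < n)%N by have := max_card D; rewrite cD card_ord.
have cC : #|~: D'| = (n - d)%N.
  by have := cardsC D'; rewrite cD' card_ord; lia.
have := Arec psi aD; rewrite -/D' cC.
set s := \sum_x psi a x.
set K := (d`! * (n - d)`! * W D psi)%N.
have HsA : `|s * Asum D' psi| <= K%:R.
  rewrite /s lin_sum //; case: ifP => [/eqP pa | _]; last by rewrite mul0r normr0 ler0n.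
  rewrite normrM normr_nat; apply: le_trans (ler_wpM2l (ler0n _ _) (IH _ _ cD' Lpsi)) _.
  rewrite -natrM ler_nat /K mulnCA [X in (_ <= X)%N]mulnC mulnC leq_mul2r.
  by rewrite W1 // orbT.
have HS : `|\sum_(j in D') Asum D' (upd psi j a)| <= (K * d)%:R.
  apply: le_trans (ler_norm_sum _ _ _) _.
  rewrite natrM -cD' mulr_natr -sumr_const; apply: ler_sum => j jD.
  apply: le_trans (IH _ _ cD' _) _.
    by move=> i; rewrite /upd; case: ifP => _; rewrite ?rpredM.
  by rewrite ler_nat leq_mul2l W2 // orbT.
move=> E.
have npos : (0 : algC) < (n - d)%:R by rewrite ltr0n subn_gt0.
rewrite -(ler_pM2l npos) -[X in X * _]normr_nat -normrM E.
apply: le_trans (ler_normB _ _) _.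
apply: le_trans (lerD HsA HS) _.
rewrite -natrD -natrM ler_nat /K.
have -> : (n - d = (n - d.+1).+1)%N by rewrite subnSK.
rewrite !factS; set e := (n - d.+1)%N; set w := W D psi.
rewrite leq_eqVlt; apply/orP; left; apply/eqP; ring.
Qed.

End Main.

Section Count.
Variable gT : finGroupType.
Hypothesis abG : abelian [set: gT].
Local Notation n := #|gT|.
Local Notation G := [set: gT].
Local Notation CF := 'CF([set: gT]).

Lemma RC (F : {set 'I_n}) (S : {set dualvec gT}) :
  {in S &, forall chi chi' : dualvec gT, {in F, forall i, chi i = chi' i} -> chi = chi'} ->
  (#|S| <= n ^ #|F|)%N.
Proof.
move=> H.
pose r (chi : dualvec gT) : dualvec gT := [ffun i => if i \in F then chi i else 0].
have inj : {in S &, injective r}.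
  move=> c c' cS c'S e; apply: H => // i iF.
  by have := congr1 (fun f : dualvec gT => f i) e; rewrite /r !ffunE iF.
rewrite -(card_in_imset inj).
apply: leq_trans (subset_leq_card (_ : _ \subset pffun_on 0 F [set: Iirr G])) _.
  apply/subsetP => f /imsetP[c _ ->]; apply/pffun_onP; split; last by move=> ? _; rewrite inE.
  apply/subsetP => i; rewrite !inE /r ffunE; case: ifP => [_ _|_]; first exact: erefl.
  by rewrite eqxx.
by rewrite card_pffun_on cardsT card_Iirr_abelian // cardsT.
Qed.

Lemma BR (chi chi' : dualvec gT) P B i :
  kills chi P -> kills chi' P -> B \in P -> i \in B ->
  (forall j, j \in B -> j != i -> chi j = chi' j) -> chi i = chi' i.
Proof.
move=> /forall_inP k /forall_inP k' BP iB H.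
suff : 'chi_(chi i) = 'chi_(chi' i) :> CF by move/irr_inj.
move: (k B BP) (k' B BP); rewrite !(bigD1 i iB).
rewrite (eq_bigr (fun j => 'chi_(chi' j))); last by move=> j /andP[jB ji]; rewrite H.
set R := \prod_(j in B | j != i) _ => /eqP e /eqP e'.
by rewrite -[LHS]mulr1 -e' mulrCA e mulr1.
Qed.

Lemma nontrivP (chi : dualvec gT) i : (i \in nontriv chi) = (chi i != 0).
Proof. by rewrite inE. Qed.

Lemma SZ (chi : dualvec gT) P :
  partition P (nontriv chi) -> kills chi P ->
  (forall B, B \in P -> 2 <= #|B|)%N /\
  ((#|P| * 2 == #|nontriv chi|)%N -> forall B, B \in P -> #|B| = 2%N).
Proof.
move=> pP kP.
have H2 B : B \in P -> (2 <= #|B|)%N.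
  move=> BP; have : B != set0 := partition_neq0 pP BP.
  rewrite -card_gt0; case E: #|B| => [|[|k]] //= _.
  move/eqP/cards1P: E => [i Bi]; subst B.
  move/forall_inP: kP => /(_ _ BP); rewrite big_set1 -irr0 => /eqP /irr_inj ci.
  have := partitionS pP BP; rewrite sub1set nontrivP ci.
  by rewrite eqxx.
split => // E B BP.
have e : (\sum_(B in P) (#|B| - 2) == 0)%N.
  have := card_partition pP; rewrite -(eqP E) -sum_nat_const => E'.
  have : (\sum_(B in P) (#|B| - 2) + \sum_(B in P) 2 = \sum_(B in P) #|B|)%N.
    by rewrite -big_split /=; apply: eq_bigr => B' B'P; rewrite subnK // H2.
  by rewrite -E' => /eqP; rewrite -{2}[\sum_(B in P) 2]add0n eqn_add2r => /eqP ->.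
move: e; rewrite sum_nat_eq0 => /forall_inP /(_ _ BP).
by have := H2 _ BP; lia.
Qed.


Lemma zero_out (chi : dualvec gT) N i : nontriv chi = N -> i \notin N -> chi i = 0.
Proof. by move=> <-; rewrite nontrivP negbK => /eqP. Qed.

Lemma tr1 (X N : {set 'I_n}) P B i j : is_transversal X P N -> B \in P ->
  i \in X -> j \in X -> i \in B -> j \in B -> i = j.
Proof.
case/and3P => _ _ /forall_inP H BP iX jX iB jB.
have /card_le1_eqP e : (#|X :&: B| <= 1)%N by rewrite (eqP (H _ BP)).
by apply: e; rewrite inE ?iX ?jX.
Qed.

Lemma two_eq (B : {set 'I_n}) x z : #|B| = 2%N -> x \in B -> z \in B -> x != z ->
  B = [set x; z].
Proof.
move=> B2 xB zB xz; apply/eqP; rewrite eq_sym eqEcard subUset !sub1set xB zB.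
by rewrite cards2 xz B2.
Qed.

Lemma K1 (N : {set 'I_n}) P : partition P N ->
  (#|[set chi : dualvec gT | (nontriv chi == N) && kills chi P]| <= n ^ (#|N| - #|P|))%N.
Proof.
move=> pP; set X := transversal P N; have tX := transversalP pP.
have XN : X \subset N := transversal_sub tX.
have cF : #|N :\: X| = (#|N| - #|P|)%N.
  by rewrite cardsD (setIidPr XN) (card_transversal tX).
rewrite -cF; apply: RC => chi chi'; rewrite !inE => /andP[/eqP nc kc] /andP[/eqP nc' kc'] H.
apply/ffunP => i.
case iN: (i \in N); last by rewrite (zero_out nc) ?iN // (zero_out nc') ?iN.
case iX: (i \in X); last by apply: H; rewrite inE iX iN.
have ic : i \in cover P by rewrite (cover_partition pP).
apply: (BR kc kc' (pblock_mem ic)); first by rewrite mem_pblock.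
move=> j jB ji; apply: H; rewrite inE (subsetP (partitionS pP (pblock_mem ic)) j jB) andbT.
apply/negP => jX; case/negP: ji; apply/eqP.
by apply: (tr1 tX (pblock_mem ic)) => //; rewrite mem_pblock.
Qed.

Lemma K2 (N : {set 'I_n}) P Q : partition P N -> partition Q N -> P != Q ->
  (#|P| * 2 = #|N|)%N -> (#|Q| * 2 = #|N|)%N ->
  (n * #|[set chi : dualvec gT | [&& nontriv chi == N, kills chi P & kills chi Q]]|
     <= n ^ (#|N| - #|P|))%N.
Proof.
move=> pP pQ PQ cP cQ.
set S := [set chi : dualvec gT | _].
have [->|[chi0 chi0S]] := set_0Vmem S; first by rewrite cards0 muln0.
move: (chi0S); rewrite inE => /and3P[/eqP n0 k0P k0Q].
have [_ szP] := SZ (etrans (congr1 _ n0) pP) k0P.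
have [_ szQ] := SZ (etrans (congr1 _ n0) pQ) k0Q.
have {}szP B : B \in P -> #|B| = 2%N by apply: szP; rewrite n0 cP.
have {}szQ B : B \in Q -> #|B| = 2%N by apply: szQ; rewrite n0 cQ.
have cPQ : #|P| = #|Q| by lia.
have /subsetPn[B BP BQ] : ~~ (P \subset Q).
  by apply: contra PQ => sPQ; rewrite eqEcard sPQ cPQ leqnn.
have tP := partition_trivIset pP; have tQ := partition_trivIset pQ.
set X := transversal P N; have tX := transversalP pP.
have XN : X \subset N := transversal_sub tX.
set F := N :\: X.
have cF : #|F| = (#|N| - #|P|)%N.
  by rewrite cardsD (setIidPr XN) (card_transversal tX).
have BN : B \subset N := partitionS pP BP.
have [r rXB] : exists r, X :&: B = [set r].
  by apply/cards1P; case/and3P: tX => _ _ /forall_inP /(_ _ BP).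
have rX : r \in X by have := set11 r; rewrite -rXB inE => /andP[].
have rB : r \in B by have := set11 r; rewrite -rXB inE => /andP[].
have [x xB xr] : exists2 x, x \in B & x != r.
  have : #|B :\ r| = 1%N by have := cardsD1 r B; rewrite rB (szP _ BP) => e; apply/eqP; rewrite -(eqn_add2l true) -e.
  move/eqP/cards1P => [x e]; have : x \in B :\ r by rewrite e set11.
  by rewrite !inE => /andP[xr xB]; exists x.
have xX : x \notin X.
  by apply/negP => xX; case/negP: xr; apply/eqP; apply: (tr1 tX BP).
have xF : x \in F by rewrite inE xX (subsetP BN).
have Bxr : B = [set x; r] := two_eq (szP _ BP) xB rB xr.
have xN : x \in cover Q by rewrite (cover_partition pQ) (subsetP BN).
set C := pblock Q x.
have CQ : C \in Q := pblock_mem xN.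
have xC : x \in C by rewrite mem_pblock.
have [z zC zx] : exists2 z, z \in C & z != x.
  have : #|C :\ x| = 1%N by have := cardsD1 x C; rewrite xC (szQ _ CQ) => e; apply/eqP; rewrite -(eqn_add2l true) -e.
  move/eqP/cards1P => [z e]; have : z \in C :\ x by rewrite e set11.
  by rewrite !inE => /andP[zx zC]; exists z.
have Cxz : C = [set x; z] by apply: two_eq (szQ _ CQ) xC zC _; rewrite eq_sym.
have zB : z \notin B.
  apply/negP => zB; case/negP: BQ.
  by rewrite (two_eq (szP _ BP) xB zB) 1?eq_sym // -Cxz.
have zN : z \in N by rewrite -(cover_partition pQ); apply/bigcupP; exists C.
have cF' : #|F| = (#|F :\ x|).+1 by rewrite (cardsD1 x F) xF.
rewrite -cF cF' expnS leq_mul2l; apply/orP; right.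
apply: RC => chi chi'; rewrite !inE => /and3P[/eqP nc kcP kcQ] /and3P[/eqP nc' kc'P kc'Q] H.
have agNB i : i \in N -> i \notin B -> chi i = chi' i.
  move=> iN iB; case iX: (i \in X); last first.
    apply: H; rewrite !inE iX iN !andbT; apply/eqP => ix; by move: iB; rewrite ix xB.
  have ic : i \in cover P by rewrite (cover_partition pP).
  set D := pblock P i; have DP : D \in P := pblock_mem ic.
  apply: (BR kcP kc'P DP); first by rewrite mem_pblock.
  move=> j jD ji; apply: H.
  have jX : j \notin X.
    apply/negP => jX; case/negP: ji; apply/eqP.
    by apply: (tr1 tX DP) => //; rewrite mem_pblock.
  rewrite !inE jX (subsetP (partitionS pP DP) j jD) !andbT.
  apply/negP => /eqP jx; case/negP: iB; rewrite -jx in xB.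
  have : D = B by rewrite -(def_pblock tP BP xB) (def_pblock tP DP jD).
  by move=> <-; rewrite mem_pblock.
have az : chi z = chi' z by apply: agNB.
have ax : chi x = chi' x.
  apply: (BR kcQ kc'Q CQ xC) => j; rewrite Cxz !inE => /orP[/eqP -> | /eqP ->].
    by rewrite eqxx.
  by [].
have ar : chi r = chi' r.
  apply: (BR kcP kc'P BP rB) => j; rewrite Bxr !inE => /orP[/eqP -> | /eqP ->].
    by [].
  by rewrite eqxx.
apply/ffunP => i.
case iN: (i \in N); last by rewrite (zero_out nc) ?iN // (zero_out nc') ?iN.
case iB: (i \in B); last by apply: agNB; rewrite ?iB.
by move: iB; rewrite Bxr !inE => /orP[/eqP -> | /eqP ->].
Qed.

End Count.

Section Final.
Variable gT : finGroupType.
Hypothesis abG : abelian [set: gT].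
Local Notation n := #|gT|.
Local Notation G := [set: gT].
Local Notation CF := 'CF([set: gT]).

Definition KP (chi : dualvec gT) :=
  [set P : {set {set 'I_n}} | partition P (nontriv chi) && kills chi P].

Lemma bigmax_cube (I : finType) (C : pred I) (F : I -> nat) X :
  (forall i, C i -> F i ^ 3 <= X)%N -> ((\max_(i | C i) F i) ^ 3 <= X)%N.
Proof.
move=> H; elim/big_ind: _ => [|x y Hx Hy|i Ci]; [by [] | by case: (leqP x y) | exact: H].
Qed.

Lemma hat_eq (chi : dualvec gT) :
  hat1S chi = ((n ^ n)%N%:R)^-1 * Asum (nontriv chi) (fun i => 'chi_(chi i)).
Proof.
rewrite /hat1S /Asum; congr (_ * _); apply: eq_bigr => pi _.
rewrite [RHS]big_mkcond; apply: eq_bigr => i _.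
case: ifP => [_|]; first by [].
move/negbT; rewrite nontrivP negbK => /eqP ->; by rewrite irr0 cfun1E inE.
Qed.

Lemma hat_bound m (chi : dualvec gT) : sparse m chi ->
  `|hat1S chi| ^+ 3 <= ((n ^ n)%N%:R^-1) ^+ 3 *
     ((m`! * (n - m)`!) ^ 3 * \sum_(P in KP chi) (n ^ #|P|) ^ 3)%N%:R.
Proof.
move=> /eqP sm; rewrite hat_eq normrM exprMn normfV normr_nat.
apply: ler_wpM2l; first by rewrite exprn_ge0 // invr_ge0 ler0n.
have L : forall i, 'chi_(chi i) \is a linear_char by move=> i; apply/char_abelianP.
have := Abound (erefl #|nontriv chi|) L; rewrite sm => H.
apply: le_trans (lerXn2r 3 (normr_ge0 _) (ler0n _ _) H) _.
rewrite -natrX ler_nat expnMn leq_mul2l; apply/orP; right.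
apply: bigmax_cube => P /andP[pP kP].
rewrite (bigD1 P) ?inE ?pP; last exact: kP.
exact: leq_addr.
Qed.


Lemma n_gt0 : (0 < n)%N.
Proof. by apply/card_gt0P; exists 1%g. Qed.

Lemma cntP m P :
  (n * (#|[set chi : dualvec gT | (sparse m chi && ~~ inM m chi) && (P \in KP chi)]|
        * (n ^ #|P|) ^ 3)
   <= (if partition P (cover P) && (#|cover P| == m) then 2 ^ 2 ^ m * n ^ (2 * m) else 0))%N.
Proof.
set S := [set chi : dualvec gT | _].
have [->|[chi0 c0S]] := set_0Vmem S; first by rewrite cards0 mul0n muln0 leq0n.
move: (c0S); rewrite !inE => /andP[/andP[sp0 ni0] /andP[pP0 kP0]].
set N := nontriv chi0 in pP0 kP0 sp0.
have cN : cover P = N := cover_partition pP0.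
have cNm : #|N| = m by apply/eqP.
rewrite cN pP0 cNm eqxx andTb.
have n0 := n_gt0.
have [ge2 sz2] := SZ abG pP0 kP0.
have le : (#|P| * 2 <= m)%N.
  rewrite -cNm (card_partition pP0) -sum_nat_const; apply: leq_sum => B BP; exact: ge2.
have SS : forall chi, chi \in S -> (nontriv chi == N) && kills chi P.
  move=> chi; rewrite !inE => /andP[_ /andP[pP kP]]; rewrite kP andbT.
  by rewrite -cN (cover_partition pP).
have pPN : partition P N by [].
case: (ltngtP (#|P| * 2)%N m) => [lt | gt | eq]; last 2 first.
- by move: (leq_trans gt le); rewrite ltnn.
- set QS := [set Q : {set {set 'I_n}} | [&& partition Q N, Q != P & (#|Q| * 2 == m)%N]].
  pose T Q := [set chi : dualvec gT | [&& nontriv chi == N, kills chi P & kills chi Q]].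
  have step1 : (#|S| <= \sum_(Q in QS) #|T Q|)%N.
    rewrite -sum1_card.
    apply: (@leq_trans (\sum_(chi in S) \sum_(Q | (Q \in QS) && (chi \in T Q)) 1)%N).
      apply: leq_sum => chi chiS.
      move: (chiS); rewrite !inE => /andP[/andP[spc nic] /andP[pPc kPc]].
      have ncN : nontriv chi = N by rewrite -cN (cover_partition pPc).
      have Php : P \in half_partitions m chi by rewrite inE pPc kPc eq andbT eqxx.
      have hn1 : #|half_partitions m chi| != 1%N by move: nic; rewrite /inM spc andTb.
      have : (0 < #|half_partitions m chi :\ P|)%N.
        move: hn1; rewrite (cardsD1 P) Php add1n; case: (#|_ :\ P|) => //.
      case/card_gt0P => Q; rewrite !inE => /andP[QP /and3P[pQ Qm kQ]].
      rewrite (bigD1 Q); first exact: leq_addr.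
      rewrite !inE QP -ncN pQ Qm eqxx kPc kQ.
      by [].
    rewrite (exchange_big_dep (mem QS)); last by move=> i j _ /andP[].
    apply: leq_sum => Q _; rewrite -sum1_card big_mkcond [in X in (_ <= X)%N]big_mkcond; apply: leq_sum => chi _.
    case: (chi \in T Q); rewrite ?andbF ?andbT; [by case: (_ && _) | by []].
  have step2 : forall Q, Q \in QS -> (n * #|T Q| <= n ^ (m - #|P|))%N.
    move=> Q; rewrite inE => /and3P[pQ QP /eqP Qm].
    rewrite -cNm; apply: (K2 abG) => //; first by rewrite eq_sym.
      by rewrite eq cNm.
    by rewrite Qm cNm.
  have step3 : (#|QS| <= 2 ^ 2 ^ m)%N.
    rewrite -cNm -card_powerset -card_powerset; apply: subset_leq_card.
    apply/subsetP => Q; rewrite inE => /and3P[pQ _ _]; rewrite powersetE.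
    by apply/subsetP => B BQ; rewrite powersetE; apply: partitionS pQ BQ.
  apply: (@leq_trans ((\sum_(Q in QS) n * #|T Q|) * (n ^ #|P|) ^ 3)%N).
    by rewrite mulnA leq_mul2r -big_distrr leq_mul2l step1 !orbT.
  apply: (@leq_trans ((\sum_(Q in QS) n ^ (m - #|P|)) * (n ^ #|P|) ^ 3)%N).
    by rewrite leq_mul2r; apply/orP; right; apply: leq_sum.
  rewrite sum_nat_const -mulnA leq_mul; first by [].
    exact: step3.
  rewrite -expnM -expnD; apply: leq_pexp2l => //; lia.
- apply: (@leq_trans (n * (n ^ (m - #|P|) * (n ^ #|P|) ^ 3))%N).
    rewrite leq_mul2l leq_mul2r; apply/orP; right; apply/orP; right.
    rewrite -cNm; apply: leq_trans (K1 abG pPN); apply: subset_leq_card.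
    by apply/subsetP => chi /SS; rewrite inE.
  apply: (@leq_trans (n ^ (2 * m))); last by rewrite leq_pmull // expn_gt0.
  rewrite -expnM -expnD -expnS; apply: leq_pexp2l => //; lia.
Qed.


Lemma sum_const_pred (I : finType) (p : pred I) c :
  (\sum_(i | p i) c = #|[set i | p i]| * c)%N.
Proof. by rewrite -sum_nat_const; apply: eq_bigl => i; rewrite inE. Qed.

Lemma cardCP m :
  (#|[set P : {set {set 'I_n}} | partition P (cover P) && (#|cover P| == m)]|
    <= 'C(n, m) * 2 ^ 2 ^ m)%N.
Proof.
rewrite -sum1_card (partition_big (fun P => cover P) (fun N : {set 'I_n} => #|N| == m)); last first.
  by move=> P; rewrite inE => /andP[].
apply: (@leq_trans (\sum_(N : {set 'I_n} | #|N| == m) 2 ^ 2 ^ m)%N).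
  apply: leq_sum => N /eqP cN.
  apply: (@leq_trans #|powerset (powerset N)|); last by rewrite !card_powerset cN.
  rewrite -sum1_card big_mkcond [in X in (_ <= X)%N]big_mkcond; apply: leq_sum => P _.
  case: ifP => [|_]; last by [].
  rewrite inE => /andP[/andP[pP _] /eqP cPN].
  have -> : P \in powerset (powerset N).
    rewrite powersetE; apply/subsetP => B BP; rewrite powersetE -cPN.
    exact: partitionS pP BP.
  by [].
by rewrite sum_const_pred card_draws card_ord.
Qed.

Lemma countY m :
  (n * \sum_(chi | sparse m chi && ~~ inM m chi) \sum_(P in KP chi) (n ^ #|P|) ^ 3
   <= 'C(n, m) * 2 ^ 2 ^ m * (2 ^ 2 ^ m * n ^ (2 * m)))%N.
Proof.
rewrite (exchange_big_dep xpredT); last by [].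
rewrite big_distrr.
apply: (@leq_trans (\sum_P (if partition P (cover P) && (#|cover P| == m)
                             then 2 ^ 2 ^ m * n ^ (2 * m) else 0))%N).
  apply: leq_sum => P _; apply: leq_trans (cntP m P).
  by rewrite sum_const_pred.
rewrite -big_mkcond.
by rewrite sum_const_pred leq_mul2r cardCP orbT.
Qed.

End Final.

Lemma bin_le n m : ('C(n, m) <= n ^ m)%N.
Proof.
apply: (@leq_trans ('C(n, m) * m`!)); first by rewrite leq_pmulr // fact_gt0.
rewrite bin_ffact ffact_prod -[in X in (_ <= X)%N](card_ord m) -prod_nat_const.
by apply: leq_prod => i _; apply: leq_subr.
Qed.

Lemma fact_le n m : (m <= n)%N -> ((n - m)`! * n ^ m <= m ^ m * n`!)%N.
Proof.
move=> mn; rewrite -(ffact_fact mn) mulnA [X in (X <= _)%N]mulnC leq_mul2r.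
apply/orP; right.
have e1 : (n ^ m = \prod_(i < m) n)%N by rewrite prod_nat_const card_ord.
have e2 : (m ^ m = \prod_(i < m) m)%N by rewrite prod_nat_const card_ord.
rewrite ffact_prod e1 e2 -big_split /=; apply: leq_prod => i _.
have := ltn_ord i; nia.
Qed.

Unset Implicit Arguments.

Theorem lemma3p2 :
  forall m : nat, exists C : algC,
  forall gT : finGroupType, abelian [set: gT] ->
    \sum_(chi : dualvec gT | sparse m chi && ~~ inM m chi) `|hat1S chi| ^+ 3
      <= C * ((#|gT|%:R)^-1 * ((#|gT| `!)%:R / (#|gT| ^ #|gT|)%N%:R) ^+ 3).
Proof.
move=> m; exists ((m`! ^ 3 * (m ^ m) ^ 3 * (2 ^ 2 ^ m * 2 ^ 2 ^ m))%N%:R) => gT abG.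
have n0 : (0 < #|gT|)%N by apply/card_gt0P; exists 1%g.
have RHS0 : 0 <= (#|gT|%:R)^-1 * ((#|gT| `!)%:R / (#|gT| ^ #|gT|)%N%:R) ^+ 3 :> algC.
  by rewrite mulr_ge0 ?invr_ge0 ?ler0n // exprn_ge0 // divr_ge0 ?ler0n.
case: (leqP m #|gT|) => [mn | nm]; last first.
  rewrite big_pred0; first by rewrite mulr_ge0 ?ler0n.
  move=> chi; apply/negbTE; apply/negP => /andP[/eqP sp _].
  by have := max_card (nontriv chi); rewrite sp card_ord leqNgt nm.
set n := #|gT| in n0 mn RHS0 *.
set A := (2 ^ 2 ^ m)%N.
set K := (m`! * (n - m)`!)%N.
set Y := (\sum_(chi : dualvec gT | sparse m chi && ~~ inM m chi)
            \sum_(P in KP chi) (n ^ #|P|) ^ 3)%N.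
have H1 : \sum_(chi : dualvec gT | sparse m chi && ~~ inM m chi) `|hat1S chi| ^+ 3
   <= \sum_(chi : dualvec gT | sparse m chi && ~~ inM m chi)
        ((n ^ n)%N%:R^-1) ^+ 3 * ((K ^ 3 * \sum_(P in KP chi) (n ^ #|P|) ^ 3)%N)%:R.
  by apply: ler_sum => chi /andP[sp _]; apply: hat_bound.
apply: le_trans H1 _.
rewrite -mulr_sumr -natr_sum -big_distrr /= -/Y.
have nY : (n * (K ^ 3 * Y) <= m`! ^ 3 * (m ^ m) ^ 3 * (A * A) * n`! ^ 3)%N.
  have cY := countY abG m.
  rewrite -/A -/Y in cY.
  apply: (@leq_trans (K ^ 3 * ('C(n, m) * A * (A * n ^ (2 * m))))).
    by rewrite mulnCA leq_mul2l cY orbT.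
  apply: (@leq_trans (K ^ 3 * (n ^ m * A * (A * n ^ (2 * m))))).
    by rewrite leq_mul2l !leq_mul2r bin_le !orbT.
  have e : (n ^ (2 * m) = n ^ m * n ^ m)%N by rewrite mulnC expnM.
  have fl := fact_le mn.
  have -> : (K ^ 3 * (n ^ m * A * (A * n ^ (2 * m))) =
             m`! ^ 3 * (A * A) * ((n - m)`! * n ^ m) ^ 3)%N.
    by rewrite e /K; ring.
  have -> : (m`! ^ 3 * (m ^ m) ^ 3 * (A * A) * n`! ^ 3 =
             m`! ^ 3 * (A * A) * (m ^ m * n`!) ^ 3)%N by ring.
  by rewrite leq_mul2l; apply/orP; right; rewrite leq_exp2r.
have nz : (n%:R : algC) != 0 by rewrite pnatr_eq0 -lt0n.
have -> : ((n ^ n)%N%:R^-1) ^+ 3 * (K ^ 3 * Y)%N%:R =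
          ((n ^ n)%N%:R^-1) ^+ 3 * ((n%:R)^-1 * (n * (K ^ 3 * Y))%N%:R) :> algC.
  by rewrite [in RHS]natrM mulKf.
have -> : (m`! ^ 3 * (m ^ m) ^ 3 * (A * A))%N%:R *
    ((n%:R)^-1 * ((n`!)%:R / (n ^ n)%N%:R) ^+ 3) =
    ((n ^ n)%N%:R^-1) ^+ 3 * ((n%:R)^-1 *
      (m`! ^ 3 * (m ^ m) ^ 3 * (A * A) * n`! ^ 3)%N%:R) :> algC.
  rewrite [in RHS]natrM [in RHS](natrX _ (n`!)) exprMn; ring.
apply: ler_wpM2l; first by rewrite exprn_ge0 // invr_ge0 ler0n.
apply: ler_wpM2l; first by rewrite invr_ge0 ler0n.
by rewrite ler_nat.
Qed.
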